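(* The separable closure $\mathbb F^{sep}$ of $\mathbb F$ is contained in $\mathcal U(\mathbb F)^{sep}_{ultra}=\prod_{s}\mathfrak F_s^{sep}/\mathcal D$. Equivalently, every $\alpha\in\mathbb F^{sep}$ can be written $\alpha=\mathrm{ulim}_s\alpha_s$ with $\alpha_s\in\mathfrak F_s^{sep}$ for $\mathcal D$-almost all $s$.
   Context: Let $S$ be an infinite set, $\mathcal D$ a nonprincipal ultrafilter on $S$; ultraproducts $\prod_sA_s/\mathcal D$ consist of tuples modulo agreement on a set in $\mathcal D$, with classes written $\mathrm{ulim}_sa_s$ and componentwise operations; ''for $\mathcal D$-almost all $s$'' means on a set belonging to $\mathcal D$. For each $s$ let $\mathbb F_s$ be a field, $\mathfrak F_s=\mathbb F_s(t)$; $\mathfrak K=\prod_s\mathbb F_s/\mathcal D$, $\mathbb F=\mathfrak K(t)$, viewed as a subfield of $\mathcal U(\mathbb F)=\prod_s\mathfrak F_s/\mathcal D$ via $\sum_i(\mathrm{ulim}_sa_{i,s})t^i\mapsto\mathrm{ulim}_s\sum_ia_{i,s}t^i$ (and quotients). For each $s$ fix an algebraic closure $\mathfrak F_s^{alg}$ and the separable closure $\mathfrak F_s^{sep}\subseteq\mathfrak F_s^{alg}$. Then $\mathcal U(\mathbb F)^{alg}_{ultra}=\prod_s\mathfrak F_s^{alg}/\mathcal D$ is an algebraically closed field containing $\mathcal U(\mathbb F)$; $\mathbb F^{alg}$ denotes the set of elements of $\mathcal U(\mathbb F)^{alg}_{ultra}$ algebraic over $\mathbb F$ (an algebraic closure of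 $\mathbb F$), and $\mathbb F^{sep}$ the separable closure of $\mathbb F$ inside $\mathbb F^{alg}$. *)

(* Defs.v *)
From HB Require Import structures.
From mathcomp Require Import all_boot all_algebra.
From mathcomp Require Import all_field generic_quotient.
From mathcomp Require Import boolp classical_sets cardinality.
Set Implicit Arguments. Unset Strict Implicit. Unset Printing Implicit Defensive.
Import GRing.Theory.
Local Open Scope ring_scope.
Local Open Scope classical_set_scope.
Local Open Scope quotient_scope.

Record ultrafilter (S : Type) (D : set (set S)) : Prop := Ultrafilter {
  uf_setT : D setT;
  uf_set0 : ~ D set0;
  uf_setI : forall X Y, D X -> D Y -> D (X `&` Y);
  uf_sub : forall X Y, X `<=` Y -> D X -> D Y;
  uf_ultra : forall X, D X \/ D (~` X) }.

Section Ultraproduct.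
Variables (S : Type) (D : set (set S)) (hD : ultrafilter D) (A : S -> fieldType).

Definition uprod_carrier := forall s, (A s : choiceType).
Implicit Types x y z : uprod_carrier.

Definition ueq x y : bool := `[< D [set s | x s = y s] >].

Lemma D_mono2 (X Y Z : set S) : D X -> D Y -> (forall s, X s -> Y s -> Z s) -> D Z.
Proof. by move=> hX hY h; apply: (uf_sub hD _ (uf_setI hD hX hY)) => s [] /h. Qed.
Lemma D_mono3 (X Y W Z : set S) : D X -> D Y -> D W ->
  (forall s, X s -> Y s -> W s -> Z s) -> D Z.
Proof.
move=> hX hY hW h; apply: (uf_sub hD _ (uf_setI hD (uf_setI hD hX hY) hW)).
by move=> s [[]] /h H /H.
Qed.
Lemma D_mono1 (X Z : set S) : D X -> (forall s, X s -> Z s) -> D Z.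
Proof. by move=> hX h; apply: (uf_sub hD _ hX). Qed.

Lemma ueq_refl : reflexive ueq.
Proof. by move=> x; apply/asboolP; apply: D_mono1 (uf_setT hD) _. Qed.
Lemma ueq_sym : symmetric ueq.
Proof.
by move=> x y; apply/asboolP/asboolP => h; apply: D_mono1 h _.
Qed.
Lemma ueq_trans : transitive ueq.
Proof.
move=> y x z /asboolP h1 /asboolP h2; apply/asboolP.
by apply: D_mono2 h1 h2 _ => s /= -> .
Qed.

Canonical ueq_equiv := EquivRel ueq ueq_refl ueq_sym ueq_trans.

Definition ultraprod := {eq_quot ueq}.
HB.instance Definition _ : EqQuotient _ ueq ultraprod := EqQuotient.on ultraprod.
HB.instance Definition _ := Choice.on ultraprod.

Definition ulim (x : uprod_carrier) : ultraprod := \pi_ultraprod x.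

Lemma ulim_eq x y : D [set s | x s = y s] -> ulim x = ulim y.
Proof. by move=> h; apply/eqmodP; apply/asboolP. Qed.
Lemma ulim_eqP x y : ulim x = ulim y -> D [set s | x s = y s].
Proof. by move/eqmodP/asboolP. Qed.
Lemma reprD x : D [set s | repr (ulim x) s = x s].
Proof. by apply: ulim_eqP; rewrite /ulim reprK. Qed.
Lemma ulimK (a : ultraprod) : ulim (repr a) = a.
Proof. exact: reprK. Qed.

Definition uzero : ultraprod := ulim (fun s => 0).
Definition uone : ultraprod := ulim (fun s => 1).
Definition uadd (a b : ultraprod) := ulim (fun s => repr a s + repr b s).
Definition uopp (a : ultraprod) := ulim (fun s => - repr a s).
Definition umul (a b : ultraprod) := ulim (fun s => repr a s * repr b s).
Definition uinv (a : ultraprod) := ulim (fun s => (repr a s)^-1).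

Ltac uq := repeat (let a := fresh "a" in elim/quotW=> a); rewrite /uadd /uopp /umul /uinv /uzero /uone.

Lemma uaddA : associative uadd.
Proof.
move=> a b c; apply: ulim_eq; apply: D_mono2 (reprD (fun s => repr a s + repr b s)) (reprD (fun s => repr b s + repr c s)) _.
by move=> s /= -> ->; rewrite addrA.
Qed.
Lemma uaddC : commutative uadd.
Proof. by move=> a b; apply: ulim_eq; apply: D_mono1 (uf_setT hD) _ => s _ /=; rewrite addrC. Qed.
Lemma uadd0 : left_id uzero uadd.
Proof.
move=> a; rewrite -[RHS]ulimK; apply: ulim_eq; apply: D_mono1 (reprD (fun s => 0)) _.
by move=> s /= ->; rewrite add0r.
Qed.
Lemma uaddN : left_inverse uzero uopp uadd.
Proof.
move=> a; apply: ulim_eq; apply: D_mono1 (reprD (fun s => - repr a s)) _.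
by move=> s /= ->; rewrite addNr.
Qed.
HB.instance Definition _ := GRing.isZmodule.Build ultraprod uaddA uaddC uadd0 uaddN.

Lemma umulA : associative umul.
Proof.
move=> a b c; apply: ulim_eq; apply: D_mono2 (reprD (fun s => repr a s * repr b s)) (reprD (fun s => repr b s * repr c s)) _.
by move=> s /= -> ->; rewrite mulrA.
Qed.
Lemma umulC : commutative umul.
Proof. by move=> a b; apply: ulim_eq; apply: D_mono1 (uf_setT hD) _ => s _ /=; rewrite mulrC. Qed.
Lemma umul1 : left_id uone umul.
Proof.
move=> a; rewrite -[RHS]ulimK; apply: ulim_eq; apply: D_mono1 (reprD (fun s => 1)) _.
by move=> s /= ->; rewrite mul1r.
Qed.
Lemma umulD : left_distributive umul uadd.
Proof.
move=> a b c; apply: ulim_eq.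
apply: D_mono3 (reprD (fun s => repr a s + repr b s)) (reprD (fun s => repr a s * repr c s)) (reprD (fun s => repr b s * repr c s)) _.
by move=> s /= -> -> ->; rewrite mulrDl.
Qed.
Lemma uone_neq0 : uone != uzero.
Proof.
apply/eqP=> /ulim_eqP h; apply: (uf_set0 hD); apply: D_mono1 h _ => s /= /eqP.
by rewrite oner_eq0.
Qed.
HB.instance Definition _ :=
  GRing.Zmodule_isComNzRing.Build ultraprod umulA umulC umul1 umulD uone_neq0.

Lemma umulV : forall a : ultraprod, a != 0 -> umul (uinv a) a = 1.
Proof.
move=> a a0; apply: ulim_eq.
have : D [set s | repr a s != 0].
  case: (uf_ultra hD [set s | repr a s != 0]) => // h.
  case/eqP: a0; rewrite -[a]ulimK; apply: ulim_eq; apply: D_mono1 h _.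
  by move=> s /= /negP; rewrite negbK => /eqP.
move=> h; apply: D_mono2 h (reprD (fun s => (repr a s)^-1)) _ => s /= nz ->.
by rewrite mulVf.
Qed.
Lemma uinv0 : uinv 0 = 0.
Proof.
apply: ulim_eq; apply: D_mono1 (reprD (fun s => 0 : A s)) _ => s /= ->.
by rewrite invr0.
Qed.
HB.instance Definition _ := GRing.ComNzRing_isField.Build ultraprod umulV uinv0.

End Ultraproduct.

Definition nonprincipal (S : Type) (D : set (set S)) : Prop :=
  forall s0 : S, ~ D [set s0].

Definition algebraic_over (K L : fieldType) (f : K -> L) (z : L) : Prop :=
  exists p : {poly K}, p != 0 /\ root (map_poly f p) z.
Definition separable_over (K L : fieldType) (f : K -> L) (z : L) : Prop :=
  exists p : {poly K}, [/\ p != 0, separable_poly p & root (map_poly f p) z].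

Section Setting.
Variables (S : Type) (D : set (set S)) (hD : ultrafilter D) (F : S -> fieldType).

Definition frakF (s : S) : fieldType := {fraction {poly F s}}.
Definition frakK : fieldType := ultraprod hD F.
Definition bbF : fieldType := {fraction {poly frakK}}.
Definition UbbF : fieldType := ultraprod hD frakF.

(* sum_i (ulim_s a_{i,s}) t^i |-> ulim_s sum_i a_{i,s} t^i *)
Definition embed_poly (p : {poly frakK}) : UbbF :=
  ulim hD (fun s => tofrac (map_poly (fun a : frakK => repr a s) p)).
Definition embedF (x : bbF) : UbbF :=
  embed_poly \n_(repr x) / embed_poly \d_(repr x).

(* U(bbF)^alg_ultra = prod_s frak F_s^alg / D, with fixed algebraic closures *)
Variables (C : S -> closedFieldType) (iota : forall s, {rmorphism frakF s -> C s}).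
Definition UalgC : fieldType := ultraprod hD (fun s => (C s : fieldType)).
Definition embedU (u : UbbF) : UalgC := ulim hD (fun s => iota s (repr u s)).
Definition embedFU (x : bbF) : UalgC := embedU (embedF x).
End Setting.

Definition ulimC (S : Type) (D : set (set S)) (hD : ultrafilter D)
  (C : S -> closedFieldType) (a : forall s, C s) : UalgC hD C :=
  @ulim S D hD (fun s => (C s : fieldType)) a.

(* Main.v *)
Require Import Defs.
From HB Require Import structures.
From mathcomp Require Import all_boot all_algebra all_field generic_quotient.
From mathcomp Require Import boolp classical_sets cardinality.
Set Implicit Arguments. Unset Strict Implicit. Unset Printing Implicit Defensive.
Import GRing.Theory.
Local Open Scope ring_scope.
Local Open Scope classical_set_scope.
Local Open Scope quotient_scope.

Section Gen.
Variables (S : Type) (D : set (set S)) (hD : ultrafilter D) (A : S -> fieldType).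
Local Notation U := (ultraprod hD A).
Local Notation ul := (@ulim S D hD A).

Lemma ulim0 : ul (fun s => 0) = 0. Proof. by []. Qed.
Lemma ulim1 : ul (fun s => 1) = 1. Proof. by []. Qed.
Lemma ulimD (x y : uprod_carrier A) : ul x + ul y = ul (fun s => x s + y s).
Proof.
change (@uadd _ _ hD A (ul x) (ul y) = ul (fun s => x s + y s)); apply: ulim_eq.
by apply: (D_mono2 hD (reprD hD x) (reprD hD y)) => s /= -> ->.
Qed.
Lemma ulimM (x y : uprod_carrier A) : ul x * ul y = ul (fun s => x s * y s).
Proof.
change (@umul _ _ hD A (ul x) (ul y) = ul (fun s => x s * y s)); apply: ulim_eq.
by apply: (D_mono2 hD (reprD hD x) (reprD hD y)) => s /= -> ->.
Qed.
Lemma ulimMn (x : uprod_carrier A) n : ul x *+ n = ul (fun s => x s *+ n).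
Proof.
elim: n => [|n IH].
  by rewrite mulr0n -ulim0; congr ul; apply: functional_extensionality_dep => s; rewrite mulr0n.
by rewrite mulrS IH ulimD; congr ul; apply: functional_extensionality_dep => s; rewrite mulrS.
Qed.
Lemma ulimX (x : uprod_carrier A) n : ul x ^+ n = ul (fun s => x s ^+ n).
Proof.
elim: n => [|n IH].
  by rewrite expr0 -ulim1; congr ul; apply: functional_extensionality_dep => s; rewrite expr0.
by rewrite exprS IH ulimM; congr ul; apply: functional_extensionality_dep => s; rewrite exprS.
Qed.
Lemma ulim_sum n (f : 'I_n -> uprod_carrier A) :
  \sum_(i < n) ul (f i) = ul (fun s => \sum_(i < n) f i s).
Proof.
elim: n f => [|n IH] f; first by rewrite big_ord0; congr ul; apply: functional_extensionality_dep => s; rewrite big_ord0.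
rewrite big_ord_recr /= (IH (fun i => f (widen_ord (leqnSn n) i))) ulimD.
by congr ul; apply: functional_extensionality_dep => s; rewrite big_ord_recr.
Qed.

Lemma D_all n (P : nat -> S -> Prop) :
  (forall i, (i < n)%N -> D (P i)) -> D [set s | forall i, (i < n)%N -> P i s].
Proof.
elim: n => [|n IH] h.
  by apply: (D_mono1 hD (uf_setT hD)) => s _ i.
apply: (D_mono2 hD (IH (fun i hi => h i (ltnW hi))) (h n (ltnSn n))) => s H1 H2 i.
rewrite ltnS leq_eqVlt => /orP [/eqP -> //|]; exact: H1.
Qed.

Definition Rep (q : {poly U}) (r : forall s, {poly A s}) :=
  (exists n, D [set s | (size (r s) <= n)%N]) /\ forall i, q`_i = ul (fun s => (r s)`_i).

Lemma Rep_uniq q r r' : Rep q r -> Rep q r' -> D [set s | r s = r' s].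
Proof.
move=> [[n hn] hq] [[n' hn'] hq'].
have hc : D [set s | forall i, (i < maxn n n')%N -> (r s)`_i = (r' s)`_i].
  apply: D_all => i _; apply: ulim_eqP; by rewrite -hq -hq'.
apply: (D_mono3 hD hn hn' hc) => s /= h1 h2 h3; apply/polyP => i.
case: (ltnP i (maxn n n')) => hi; first exact: h3.
rewrite !nth_default //.
  by apply: leq_trans h2 (leq_trans (leq_maxr n n') hi).
by apply: leq_trans h1 (leq_trans (leq_maxl n n') hi).
Qed.

Lemma Rep_size q r : Rep q r ->
  exists n, D [set s | (size (r s) <= n)%N] /\ (size q <= n)%N.
Proof.
move=> [[n hn] hq]; exists n; split => //.
apply/leq_sizeP => j hj; rewrite hq -ulim0; apply: ulim_eq.
by apply: (D_mono1 hD hn) => s /= h; rewrite nth_default // (leq_trans h hj).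
Qed.

Definition comp (q : {poly U}) : forall s, {poly A s} :=
  fun s => \poly_(i < size q) repr q`_i s.

Lemma Rep_comp q : Rep q (comp q).
Proof.
split; first by exists (size q); apply: (D_mono1 hD (uf_setT hD)) => s _ /=; apply: size_poly.
move=> i; rewrite /comp.
case: (ltnP i (size q)) => hi.
  transitivity (ul (fun s => repr q`_i s)); first by rewrite ulimK.
  by congr ul; apply: functional_extensionality_dep => s; rewrite coef_poly hi.
rewrite nth_default // -ulim0; congr ul; apply: functional_extensionality_dep => s.
by rewrite coef_poly ltnNge hi.
Qed.

Lemma Rep_add q r q' r' : Rep q r -> Rep q' r' -> Rep (q + q') (fun s => r s + r' s).
Proof.
move=> [[n hn] hq] [[n' hn'] hq']; split.
  exists (maxn n n'); apply: (D_mono2 hD hn hn') => s /= h1 h2.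
  apply: leq_trans (size_add _ _) _; rewrite geq_max.
  by rewrite (leq_trans h1 (leq_maxl _ _)) (leq_trans h2 (leq_maxr _ _)).
move=> i; rewrite coefD hq hq' ulimD; congr ul; apply: functional_extensionality_dep => s.
by rewrite coefD.
Qed.

Lemma Rep_mul q r q' r' : Rep q r -> Rep q' r' -> Rep (q * q') (fun s => r s * r' s).
Proof.
move=> [[n hn] hq] [[n' hn'] hq']; split.
  exists (n + n')%N; apply: (D_mono2 hD hn hn') => s /= h1 h2.
  apply: leq_trans (size_mul_leq _ _) _.
  apply: leq_trans (leq_pred _) _; exact: leq_add.
move=> i; rewrite coefM.
under eq_bigr => j _ do rewrite hq hq' ulimM.
rewrite ulim_sum; congr ul; apply: functional_extensionality_dep => s.
by rewrite coefM.
Qed.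

Lemma Rep_1 : Rep 1 (fun s => 1).
Proof.
split; first by exists 1%N; apply: (D_mono1 hD (uf_setT hD)) => s _ /=; rewrite size_poly1.
move=> i; rewrite coef1; case: i => [|i] /=.
  apply/esym; transitivity (ul (fun s => (1 : A s))); last by [].
  congr ul; apply: functional_extensionality_dep => s; by rewrite coef1.
apply/esym; transitivity (ul (fun s => (0 : A s))); last by [].
congr ul; apply: functional_extensionality_dep => s; by rewrite coef1.
Qed.

Lemma Rep_deriv q r : Rep q r -> Rep q^`() (fun s => (r s)^`()).
Proof.
move=> [[n hn] hq]; split.
  exists n; apply: (D_mono1 hD hn) => s /= h.
  have [->|nz] := eqVneq (r s) 0; first by rewrite deriv0 size_poly0.
  exact: leq_trans (ltnW (lt_size_deriv nz)) h.
move=> i; rewrite coef_deriv hq ulimMn; congr ul; apply: functional_extensionality_dep => s.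
by rewrite coef_deriv.
Qed.

Lemma Rep_horner q r (a : uprod_carrier A) : Rep q r ->
  q.[ul a] = ul (fun s => (r s).[a s]).
Proof.
move=> hR; have [n [hn hsz]] := Rep_size hR; case: hR => _ hq.
rewrite (horner_coef_wide _ hsz).
under eq_bigr => i _ do rewrite hq ulimX ulimM.
rewrite ulim_sum; apply: ulim_eq; apply: (D_mono1 hD hn) => s /= h.
by rewrite (horner_coef_wide _ h).
Qed.

End Gen.

Lemma Rep_map (S : Type) (D : set (set S)) (hD : ultrafilter D) (A B : S -> fieldType)
  (f : forall s, {rmorphism A s -> B s}) (g : ultraprod hD A -> ultraprod hD B)
  (hg : forall x, g (ulim hD x) = ulim hD (fun s => f s (x s)))
  q r : Rep q r -> Rep (map_poly g q) (fun s => map_poly (f s) (r s)).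
Proof.
have g0 : g 0 = 0.
  by rewrite -(ulim0 hD A) hg -ulim0; congr ulim; apply: functional_extensionality_dep => s; rewrite rmorph0.
move=> [[n hn] hq]; split.
  by exists n; apply: (D_mono1 hD hn) => s /=; rewrite size_map_poly.
move=> i; rewrite coef_map_id0 // hq hg; congr ulim; apply: functional_extensionality_dep => s.
by rewrite coef_map.
Qed.
Lemma frac_mul_den (R : idomainType) (r : {ratio R}) :
  (\pi_{fraction R} r) * (tofrac \d_r) = (tofrac \n_r).
Proof.
have hd := denom_ratioP r.
unlock tofrac.
change (FracField.mul (\pi_{fraction R} r) (\pi_{fraction R} (Ratio \d_r 1)) = \pi_{fraction R} (Ratio \n_r 1)).
rewrite -FracField.pi_mul; apply/eqmodP; rewrite /= FracField.equivfE.
rewrite /FracField.mulf !numden_Ratio ?oner_eq0 ?mulf_neq0 ?oner_eq0 //.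
by rewrite !mulr1 mulrC.
Qed.

Lemma frac_repr (R : idomainType) (x : {fraction R}) :
  x = (tofrac \n_(repr x)) / (tofrac \d_(repr x)).
Proof.
have hd : (tofrac \d_(repr x)) != 0 :> {fraction R} by rewrite tofrac_eq0 denom_ratioP.
by rewrite -frac_mul_den reprK mulfK.
Qed.

Section Spec.
Variables (S : Type) (D : set (set S)) (hD : ultrafilter D) (F : S -> fieldType).
Local Notation K := (frakK hD F).
Local Notation E := (@embed_poly S D hD F).
Local Notation eF := (@embedF S D hD F).

Lemma E_comp p : E p = ulim hD (fun s => tofrac (comp p s)).
Proof. by []. Qed.

Lemma ED p q : E (p + q) = E p + E q.
Proof.
rewrite !E_comp ulimD; apply: ulim_eq.
apply: (D_mono1 hD (Rep_uniq (Rep_comp (p + q)) (Rep_add (Rep_comp p) (Rep_comp q)))).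
by move=> s /= ->; rewrite rmorphD.
Qed.
Lemma EM p q : E (p * q) = E p * E q.
Proof.
rewrite !E_comp ulimM; apply: ulim_eq.
apply: (D_mono1 hD (Rep_uniq (Rep_comp (p * q)) (Rep_mul (Rep_comp p) (Rep_comp q)))).
by move=> s /= ->; rewrite rmorphM.
Qed.
Lemma E1 : E 1 = 1.
Proof.
rewrite !E_comp -ulim1; apply: ulim_eq.
apply: (D_mono1 hD (Rep_uniq (Rep_comp 1) (Rep_1 hD F))).
by move=> s /= ->; rewrite rmorph1.
Qed.
Lemma E0 : E 0 = 0.
Proof. by apply: (addrI (E 0)); rewrite -ED !addr0. Qed.
Lemma EN p : E (- p) = - E p.
Proof. by apply: (addrI (E p)); rewrite -ED !subrr E0. Qed.

Lemma E_neq0 p : p != 0 -> E p != 0.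
Proof.
apply: contraNneq => h0; apply/eqP/polyP => i.
have h : D [set s | tofrac (comp p s) = 0].
  by apply: ulim_eqP; rewrite -E_comp h0.
have h' : D [set s | comp p s = 0].
  by apply: (D_mono1 hD h) => s /= /eqP; rewrite tofrac_eq0 => /eqP.
case: (Rep_comp p) => _ ->; rewrite coef0 -(ulim0 hD F); apply: ulim_eq.
by apply: (D_mono1 hD h') => s /= ->; rewrite coef0.
Qed.


Lemma eF_frac (n d : {poly K}) : d != 0 -> eF (tofrac n / tofrac d) = E n / E d.
Proof.
move=> dn0; rewrite /embedF.
set x := tofrac n / tofrac d.
have hx := frac_repr x.
have d00 := denom_ratioP (repr x).
have fd : tofrac d != 0 :> {fraction {poly K}} by rewrite tofrac_eq0.
have fd0 : tofrac \d_(repr x) != 0 :> {fraction {poly K}} by rewrite tofrac_eq0.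
have : tofrac n / tofrac d == tofrac \n_(repr x) / tofrac \d_(repr x) :> {fraction {poly K}} by rewrite -hx.
rewrite (eqr_div _ _ fd fd0) -!rmorphM tofrac_eq => /eqP h.
have e1 := E_neq0 dn0. have e2 := E_neq0 d00.
apply/eqP; rewrite (eqr_div _ _ e2 e1) -!EM -h.
exact: eqxx.
Qed.

Lemma frac_ex (x : bbF hD F) : exists n d, d != 0 /\ x = tofrac n / tofrac d :> bbF hD F.
Proof. exists \n_(repr x), \d_(repr x); split; [exact: denom_ratioP | exact: frac_repr]. Qed.

Lemma tofrac_nz (d : {poly K}) : d != 0 -> tofrac d != 0 :> bbF hD F.
Proof. by rewrite tofrac_eq0. Qed.

Lemma eF_D x y : eF (x + y) = eF x + eF y.
Proof.
have [nx [dx [hx ->]]] := frac_ex x; have [ny [dy [hy ->]]] := frac_ex y.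
have hxy : dx * dy != 0 by rewrite mulf_neq0.
rewrite (addf_div _ _ (tofrac_nz hx) (tofrac_nz hy)) -!rmorphM -rmorphD !eF_frac //.
by rewrite (addf_div _ _ (E_neq0 hx) (E_neq0 hy)) ED !EM.
Qed.

Lemma eF_N x : eF (- x) = - eF x.
Proof.
have [nx [dx [hx ->]]] := frac_ex x.
by rewrite -mulNr -rmorphN !eF_frac // EN mulNr.
Qed.

Lemma eF_M x y : eF (x * y) = eF x * eF y.
Proof.
have [nx [dx [hx ->]]] := frac_ex x; have [ny [dy [hy ->]]] := frac_ex y.
have hxy : dx * dy != 0 by rewrite mulf_neq0.
rewrite mulf_div -!rmorphM !eF_frac //.
by rewrite mulf_div !EM.
Qed.

Lemma eF_1 : eF 1 = 1.
Proof.
have -> : (1 : bbF hD F) = tofrac 1 / tofrac 1 by rewrite rmorph1 divr1.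
by rewrite eF_frac ?oner_eq0 // E1 divr1.
Qed.

Lemma eF_zmod : zmod_morphism eF.
Proof. by move=> x y; rewrite eF_D eF_N. Qed.
Lemma eF_monoid : monoid_morphism eF.
Proof. by split; [exact: eF_1 | exact: eF_M]. Qed.

End Spec.

HB.instance Definition _ S D hD F := GRing.isZmodMorphism.Build _ _ (@embedF S D hD F) (@eF_zmod S D hD F).
HB.instance Definition _ S D hD F := GRing.isMonoidMorphism.Build _ _ (@embedF S D hD F) (@eF_monoid S D hD F).


Theorem mainTheorem4 (S : Type) (D : set (set S)) (hD : ultrafilter D)
    (S_infinite : infinite_set [set: S]) (D_nonprincipal : nonprincipal D)
    (F : S -> fieldType) (C : S -> closedFieldType)
    (iota : forall s, {rmorphism frakF F s -> C s})
    (C_alg : forall s (z : C s), algebraic_over (iota s) z)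
    (alpha : UalgC hD C)
    (alpha_sep : separable_over (embedFU iota) alpha) :
  exists a : forall s, C s,
    alpha = ulimC hD a /\
    D [set s | separable_over (iota s) (a s)].
Proof.
case: alpha_sep => p [pn0 psep proot].
have [[u v] huv] : exists u : {poly bbF hD F} * {poly bbF hD F}, u.1 * p + u.2 * p^`() = 1.
  move: psep; rewrite unlock => /Bezout_coprimepP [[u1 u2] /= h].
  rewrite -size_poly_eq1 in h; case/size_poly1P: h => c c0 hc.
  exists (c^-1%:P * u1, c^-1%:P * u2) => /=.
  by rewrite -!mulrA -mulrDr hc -polyCM mulVf.
set eF := @embedF S D hD F.
set Q := map_poly eF p.
have hQ : map_poly eF u * Q + map_poly eF v * Q^`() = 1.
  by rewrite /Q deriv_map -!rmorphM -rmorphD huv rmorph1.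
have R1 := Rep_add (Rep_mul (Rep_comp (map_poly eF u)) (Rep_comp Q))
                   (Rep_mul (Rep_comp (map_poly eF v)) (Rep_deriv (Rep_comp Q))).
rewrite hQ in R1.
have H1 := Rep_uniq R1 (Rep_1 hD (frakF F)).
have hg : forall x, embedU iota (ulim hD x) = ulim hD (fun s => iota s (x s)).
  move=> x; rewrite /embedU; apply: ulim_eq.
  by apply: (D_mono1 hD (reprD hD x)) => s /= ->.
have Rm := Rep_map hg (Rep_comp Q).
have hmap : map_poly (embedFU iota) p = map_poly (embedU iota) Q.
  rewrite /Q -map_poly_comp_id0; last first.
    by rewrite -(ulim0 hD (frakF F)) hg -(ulim0 hD (fun s => (C s : fieldType))); congr ulim; apply: functional_extensionality_dep => s; rewrite rmorph0.
  by apply: eq_map_poly.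
have H2 : D [set s | (map_poly (iota s) (comp Q s)).[repr alpha s] = 0].
  apply: ulim_eqP; rewrite -(Rep_horner _ Rm) ulimK -hmap.
  exact: (eqP proot).
exists (repr alpha); split; first by rewrite /ulimC ulimK.
apply: (D_mono2 hD H1 H2) => s /= e1 e2.
exists (comp Q s); split => //.
  apply/eqP => h0; move: e1; rewrite h0 mulr0 deriv0 mulr0 addr0 => /eqP.
  by rewrite eq_sym oner_eq0.
  rewrite unlock; apply/Bezout_coprimepP; exists (comp (map_poly eF u) s, comp (map_poly eF v) s) => /=.
  by rewrite e1 eqpxx.
exact/eqP.
Qed.
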